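(* Let $U=[a_1,b_1]\cup\dots\cup[a_k,b_k]\subseteq\mathbb{R}$ with $a_1\le b_1<a_2\le b_2<\dots<a_k\le b_k$. Suppose $f=\sum_{i=0}^{2d}a_i(x)y^i\in\mathbb{R}[x,y]$ is non-negative on $U\times\mathbb{R}$, has only finitely many zeros in $U\times\mathbb{R}$, and $a_{2d}(x)>0$ for all $x\in U$. Then there exists $\epsilon(x)\in\mathbb{R}[x]$ with $\epsilon(x)\ge0$ on $U$ such that $f(x,y)\ge\epsilon(x)(1+y^2)^d$ for all $(x,y)\in U\times\mathbb{R}$, and for each $x\in U$, $\epsilon(x)=0$ if and only if there exists $y\in\mathbb{R}$ with $f(x,y)=0$. *)

(* Defs.v *)
From HB Require Import structures.
From mathcomp Require Import all_boot all_order all_algebra.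
From mathcomp Require Import boolp classical_sets cardinality reals.
Set Implicit Arguments. Unset Strict Implicit. Unset Printing Implicit Defensive.
Import Order.TTheory GRing.Theory Num.Theory.
Local Open Scope ring_scope.

(* A bivariate polynomial f in R[x,y] is represented as an element of
   {poly {poly R}}: a polynomial in y whose coefficients a_i are polynomials
   in x, i.e. f = \sum_i a_i(x) y^i with a_i = f`_i. *)
Definition eval2 (R : realType) (f : {poly {poly R}}) (x y : R) : R :=
  (map_poly (fun p : {poly R} => p.[x]) f).[y].

(* U = [a_0,b_0] u ... u [a_{k-1},b_{k-1}] (0-indexed). *)
Definition inU (R : realType) (k : nat) (a b : nat -> R) (x : R) : Prop :=
  exists2 i : nat, (i < k)%N & a i <= x <= b i.

Definition intervals_ok (R : realType) (k : nat) (a b : nat -> R) : Prop :=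
  (forall i : nat, (i < k)%N -> a i <= b i) /\
  (forall i : nat, (i.+1 < k)%N -> b i < a i.+1).

(* Main.v *)
Require Import Defs.
From HB Require Import structures.
From mathcomp Require Import all_boot all_order all_algebra.
From mathcomp Require Import boolp classical_sets cardinality reals.
From mathcomp Require Import topology normedtype derive.
From mathcomp Require Import zify ring lra.
Import Order.TTheory GRing.Theory Num.Theory numFieldNormedType.Exports.
Local Open Scope ring_scope.
Local Open Scope classical_set_scope.
Section A.
Variable R : realType.

Lemma exists_coprime (p q : {poly R}) : q != 0 ->
  exists t : R, (size (gcdp (p - t%:P) q) <= 1)%N.
Proof.
move=> q0; have [//|H] := pselect (exists t : R, (size (gcdp (p - t%:P) q) <= 1)%N).
exfalso.
have Hg t : (1 < size (gcdp (p - t%:P) q))%N.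
  by rewrite ltnNge; apply/negP => h; apply: H; exists t.
pose g (i : nat) := gcdp (p - (i%:R : R)%:P) q.
have g0 i : g i != 0 by rewrite -size_poly_gt0 (ltn_trans _ (Hg _)).
have cop i j : i != j -> coprimep (g i) (g j).
  move=> ij; apply/coprimepP => e ei ej.
  have e1 : e %| (p - (j%:R : R)%:P) - (p - (i%:R)%:P).
    by apply: dvdp_sub; [apply: dvdp_trans ej (dvdp_gcdl _ _)|apply: dvdp_trans ei (dvdp_gcdl _ _)].
  have E : (p - (j%:R : R)%:P) - (p - (i%:R)%:P) = (i%:R - j%:R : R)%:P.
    by rewrite polyCB; ring.
  rewrite E in e1.
  have c0 : (i%:R - j%:R : R)%:P != 0.
    by rewrite polyC_eq0 subr_eq0 eqr_nat.
  have e0 : e != 0 by apply/eqP => e0; move: e1; rewrite e0 dvd0p (negPf c0).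
  rewrite -size_poly_eq1 eqn_leq size_poly_gt0 e0 andbT.
  by have := dvdp_leq c0 e1; rewrite size_polyC => h; exact: leq_trans h (leq_b1 _).
have cop2 n m : (n <= m)%N -> coprimep (\prod_(i < n) g i) (g m).
  elim: n => [|n IH] nm; first by rewrite big_ord0 coprime1p.
  rewrite big_ord_recr /= coprimepMl IH ?(ltnW nm) //=.
  by apply: cop; rewrite neq_ltn nm.
have dv n : (\prod_(i < n) g i %| q)%R && (n < size (\prod_(i < n) g i)%R)%N.
  elim: n => [|n /andP[d1 s1]]; first by rewrite big_ord0 dvd1p size_poly1.
  rewrite big_ord_recr /= Gauss_dvdp ?cop2 // d1 dvdp_gcdr /=.
  have P0 : \prod_(i < n) g i != 0 by rewrite -size_poly_gt0 (leq_ltn_trans _ s1).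
  rewrite size_mul // ?g0 //.
  idtac.
  have := Hg (n%:R); rewrite -/(g n); move=> h; move: s1 h; set A := size _; set B := size _; lia.
have /andP[d1 s1] := dv (size q).
by have h := dvdp_leq q0 d1; move: s1; rewrite ltnNge h.
Qed.
Local Notation hA x t := (horner_eval t \o map_poly (horner_eval x)).
Lemma hA_C (x t : R) (c : {poly R}) : hA x t (c%:P) = c.[x].
Proof. by rewrite /= map_polyC /= horner_evalE hornerC. Qed.
Lemma hA_X (x t : R) : hA x t 'X = t.
Proof. by rewrite /= map_polyX /= horner_evalE hornerX. Qed.
Lemma map_hA (f : {poly {poly R}}) (x t : R) :
  map_poly (hA x t) (map_poly polyC f) = map_poly (horner_eval x) f.
Proof. by rewrite -map_poly_comp; apply: eq_map_poly => c /=; exact: (hA_C x t c). Qed.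
Lemma coef_size (p : {poly R}) i : p`_i != 0 -> (i < size p)%N.
Proof. by apply: contraR; rewrite -leqNgt => /leq_sizeP ->. Qed.
Lemma coef_sizeA (p : {poly {poly {poly R}}}) i : p`_i != 0 -> (i < size p)%N.
Proof. by apply: contraR; rewrite -leqNgt => /leq_sizeP ->. Qed.

Lemma resultant_exists (f : {poly {poly R}}) (x1 : R) :
  (2 < size f)%N -> (lead_coef f).[x1] != 0 ->
  exists Rp : {poly {poly R}}, Rp != 0 /\
    forall x y, (deriv (map_poly (horner_eval x) f)).[y] = 0 ->
      (map_poly (horner_eval x) Rp).[(map_poly (horner_eval x) f).[y]] = 0.
Proof.
move=> sf lf.
pose fA : {poly {poly {poly R}}} := map_poly polyC f.
pose PA := fA - ('X)%:P.
pose QA := deriv fA.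
have sfA : size fA = size f by rewrite size_map_polyC.
have f0 : f != 0 by rewrite -size_poly_gt0 (ltn_trans _ sf).
have fA0 : fA != 0 by rewrite -size_poly_gt0 sfA (ltn_trans _ sf).
have sPA : size PA = size f.
  rewrite /PA size_polyDl sfA // size_polyN (leq_ltn_trans (size_polyC_leq1 _)) //.
  exact: ltn_trans sf.
have lPA : lead_coef PA = (lead_coef f)%:P.
  rewrite /PA lead_coefDl ?size_polyN ?sfA ?(leq_ltn_trans (size_polyC_leq1 _)) //; last exact: ltn_trans sf.
  by rewrite /fA lead_coef_map_inj //; exact: polyC_inj.
have cQA : QA`_(size f).-2 = (lead_coef f)%:P *+ (size f).-1.
  rewrite /QA coef_deriv /fA coef_map /= lead_coefE.
  have -> : ((size f).-2.+1 = (size f).-1)%N by move: sf; case: (size f) => [|[|n]].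
  by [].
have cQA0 : (lead_coef f *+ (size f).-1) != 0.
  apply/eqP => h; move/eqP: lf; apply; have := congr1 (horner_eval x1) h.
  rewrite raddfMn /= horner_evalE raddf0 => /eqP; rewrite mulrn_eq0 => /orP[|/eqP //].
  by move: sf; case: (size f) => [|[|n]].
have QA0 : QA`_(size f).-2 != 0.
  by rewrite cQA -polyCMn polyC_eq0 cQA0.
have sQA : size QA = (size f).-1.
  apply/eqP; rewrite eqn_leq; apply/andP; split.
    by have := lt_size_deriv fA0; rewrite sfA -/QA; move: sf; case: (size f).
  have := coef_sizeA _ _ QA0; move: sf; case: (size f) => [|[|n]] //.
have lQA : lead_coef QA = (lead_coef f *+ (size f).-1)%:P.
  by rewrite lead_coefE sQA polyCMn -cQA.
pose p1 := map_poly (horner_eval x1) f.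
have sp1 : size p1 = size f by rewrite size_map_poly_id0.
have lp1 : p1`_(size f).-1 = (lead_coef f).[x1] by rewrite coef_map.
have dp10 : deriv p1 != 0.
  apply/eqP => H; have := congr1 (fun q : {poly R} => q`_(size f).-2) H; rewrite /= coef_deriv coef0.
  have -> : ((size f).-2.+1 = (size f).-1)%N by move: sf; case: (size f) => [|[|n]].
  move/eqP; rewrite lp1 mulrn_eq0 (negPf lf) orbF.
  by move: sf; case: (size f) => [|[|n]].
have [t1 ht1] := exists_coprime p1 _ dp10.
pose Rp := resultant PA QA.
exists Rp; split.
  apply/eqP => R0.
  have hl1 : hA x1 t1 (lead_coef PA) != 0 by rewrite lPA hA_C.
  have hl2 : hA x1 t1 (lead_coef QA) != 0.
    rewrite lQA hA_C -horner_evalE raddfMn /= horner_evalE mulrn_eq0 negb_or lf andbT.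
    by move: sf; case: (size f) => [|[|n]].
  have := map_resultant hl1 hl2; rewrite -/Rp R0 rmorph0.
  have -> : map_poly (hA x1 t1) PA = p1 - t1%:P.
    by rewrite /PA rmorphB /= map_hA map_polyC /= map_polyX horner_evalE hornerX.
  have -> : map_poly (hA x1 t1) QA = deriv p1.
    by rewrite /QA deriv_map map_hA -deriv_map.
  move/esym/eqP; rewrite resultant_eq0 ltnNge.
  by rewrite ht1.
move=> x y dy.
have sPA1 : (1 < size PA)%N by rewrite sPA (ltn_trans _ sf).
have sQA1 : (1 < size QA)%N by rewrite sQA; move: sf; case: (size f) => [|[|[|n]]].
have [[u v] _ /= E] := resultant_in_ideal sPA1 sQA1.
pose t := (map_poly (horner_eval x) f).[y].
have := congr1 (fun P => (map_poly (hA x t) P).[y]) E.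
rewrite /= map_polyC hornerC rmorphD !rmorphM /= hornerD !hornerM.
have -> : map_poly (hA x t) PA = map_poly (horner_eval x) f - t%:P.
  by rewrite /PA rmorphB /= map_hA map_polyC /= map_polyX horner_evalE hornerX.
have -> : map_poly (hA x t) QA = deriv (map_poly (horner_eval x) f).
  by rewrite /QA deriv_map map_hA -deriv_map.
rewrite dy hornerD hornerN hornerC subrr !mulr0 addr0.
by rewrite /= horner_evalE.
Qed.
Lemma factor_list (c : {poly R}) (s : seq R) : c != 0 ->
  exists Q W T : {poly R}, exists E : nat,
    [/\ c = Q * W, (forall z, z \in s -> W.[z] != 0) &
        (\prod_(z <- s) ('X - z%:P) ^+ 2) ^+ E = Q * T].
Proof.
move=> c0; elim: s => [|a s [Q [W [T [E [cQW Wz PE]]]]]].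
  by exists 1, c, 1, 0%N; rewrite big_nil expr0 !mul1r.
have W0 : W != 0 by apply: contraNneq c0 => W0; rewrite cQW W0 mulr0.
have [m [W' HW' EW]] := multiplicity_XsubC W a.
rewrite W0 /= in HW'.
exists (Q * ('X - a%:P) ^+ m), W',
  (T * (\prod_(z <- s) ('X - z%:P) ^+ 2) ^+ m * ('X - a%:P) ^+ (m + 2 * E)), (E + m)%N.
split.
- by rewrite cQW EW; ring.
- move=> z; rewrite in_cons => /orP[/eqP -> //|zs].
  by have := Wz z zs; rewrite EW hornerM; apply: contraNneq => ->; rewrite mul0r.
- rewrite big_cons exprMn -exprM exprD PE.
  have -> : (('X - a%:P) ^+ (2 * (E + m)) = ('X - a%:P) ^+ m * ('X - a%:P) ^+ (m + 2 * E))%R.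
    by rewrite -exprD; congr (_ ^+ _); lia.
  ring.
Qed.

Lemma coef0_bound (r : {poly R}) (m : R) (n : nat) :
  0 <= m <= 1 -> (size r <= n)%N -> r.[m] = 0 ->
  `|r`_0| <= m * \sum_(i < n) `|r`_i|.
Proof.
move=> /andP[m0 m1] sr; rewrite (horner_coef_wide _ sr).
case: n sr => [|n] sr.
  by move=> _; move: sr; rewrite leqn0 size_poly_eq0 => /eqP ->; rewrite coef0 normr0 big_ord0 mulr0.
rewrite big_ord_recl /= expr0 mulr1 => /eqP; rewrite addr_eq0 => /eqP ->.
rewrite normrN big_ord_recl /= mulrDr.
apply: le_trans (ler_norm_sum _ _ _) _.
rewrite -[X in X <= _]add0r; apply: lerD; first by rewrite mulr_ge0.
rewrite mulr_sumr; apply: ler_sum => i _.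
rewrite normrM normrX (ger0_norm m0) mulrC; apply: ler_wpM2r => //.
by rewrite /bump /= add1n exprS -[leRHS]mulr1 ler_wpM2l // exprn_ile1.
Qed.

Lemma decomp_t (Rp : {poly {poly R}}) : Rp != 0 ->
  exists R1 : {poly {poly R}}, exists s : nat, Rp = R1 * 'X ^+ s /\ R1`_0 != 0.
Proof.
move=> R0; have [m [q Hq E]] := multiplicity_XsubC Rp 0.
rewrite R0 /= in Hq; exists q, m; split.
  by rewrite E polyC0 subr0.
by move: Hq; rewrite /root horner_coef0.
Qed.

Lemma root_bound (R1 : {poly {poly R}}) (s : nat) (x m : R) :
  0 < m <= 1 -> (map_poly (horner_eval x) (R1 * 'X ^+ s)).[m] = 0 ->
  `|(R1`_0).[x]| <= m * \sum_(i < size R1) `|(R1`_i).[x]|.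
Proof.
move=> /andP[m0 m1]; rewrite rmorphM rmorphXn /= map_polyX hornerM hornerXn.
move/eqP; rewrite mulf_eq0 expf_eq0 (gt_eqF m0) andbF orbF => /eqP H.
have m01 : 0 <= m <= 1 by rewrite (ltW m0) m1.
have := coef0_bound _ _ (size R1) m01 (size_poly _ _) H.
rewrite coef_map /= horner_evalE.
by under eq_bigr do rewrite coef_map.
Qed.
End A.
Section C.
Variable R : realType.

Lemma cont_fst_poly (p : {poly R}) : continuous (fun z : R * R => p.[z.1]).
Proof.
move=> z; apply: (continuous_comp (f := fst) (g := horner p)); first exact: cvg_fst.
exact: continuous_horner.
Qed.
Lemma cont_snd_poly (p : {poly R}) : continuous (fun z : R * R => p.[z.2]).
Proof.
move=> z; apply: (continuous_comp (f := snd) (g := horner p)); first exact: cvg_snd.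
exact: continuous_horner.
Qed.

Lemma cont_sum2 n (F : nat -> R * R -> R) : (forall i, continuous (F i)) ->
  continuous (fun z => \sum_(i < n) F i z).
Proof.
move=> cF; elim: n => [|n IH].
  have -> : (fun z : R * R => \sum_(i < 0) F i z) = fun=> 0.
    by apply/funext => z; rewrite big_ord0.
  by move=> z; exact: cst_continuous.
have -> : (fun z : R * R => \sum_(i < n.+1) F i z) =
   (fun z => \sum_(i < n) F i z + F n z).
  by apply/funext => z; rewrite big_ord_recr.
by move=> z; apply: cvgD; [exact: IH|exact: cF].
Qed.

Definition ev2 (f : {poly {poly R}}) (x y : R) : R :=
  (map_poly (fun p : {poly R} => p.[x]) f).[y].

Lemma ev2E (f : {poly {poly R}}) x y :
  ev2 f x y = \sum_(i < size f) (f`_i).[x] * y ^+ i.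
Proof.
rewrite /ev2 (horner_coef_wide _ (size_poly _ _)).
by apply: eq_bigr => i _; rewrite coef_poly ltn_ord.
Qed.

Lemma cont_ev2 (f : {poly {poly R}}) : continuous (fun z : R * R => ev2 f z.1 z.2).
Proof.
pose F := fun (j : nat) (w : R * R) => (f`_j).[w.1] * ('X^j).[w.2].
have -> : (fun z : R * R => ev2 f z.1 z.2) =
  (fun z => \sum_(i < size f) F i z).
  by apply/funext => z; rewrite ev2E; apply: eq_bigr => i _; rewrite /F hornerXn.
apply: (cont_sum2 (size f) F) => i z.
exact: continuousM (cont_fst_poly _ _) (cont_snd_poly _ _).
Qed.
End C.
Section D.
Variable R : realType.
Variables (a b : nat -> R).

Lemma compact_U k : compact [set x | inU k a b x].
Proof.
elim: k => [|n IH].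
  have -> : [set x | inU 0 a b x] = set0 by apply/seteqP; split=> x // [i].
  exact: compact0.
have -> : [set x | inU n.+1 a b x] = [set x | inU n a b x] `|` `[a n, b n].
  apply/seteqP; split => x /=.
  - case => i; rewrite ltnS leq_eqVlt => /orP[/eqP -> h|lt h].
      by right; rewrite /= in_itv.
    by left; exists i.
  - case => [[i lt h]|]; first by exists i => //; exact: ltnW.
    by rewrite /= in_itv => h; exists n.
apply: compactU => //; exact: segment_compact.
Qed.


Lemma boundU k (g : R -> R) : continuous g -> exists B, forall x, inU k a b x -> g x <= B.
Proof.
move=> cg; have [[x0 hx0]|nU] := pselect (exists x, inU k a b x).
  have [c cU hc] := @compact_EVT_max _ _ g [set x | inU k a b x]
    (ex_intro _ x0 hx0) (compact_U k) (continuous_subspaceT cg).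
  by exists (g c) => x hx; apply: hc; rewrite inE.
by exists 0 => x hx; exfalso; apply: nU; exists x.
Qed.

Lemma lowerU k (g : R -> R) : continuous g -> (forall x, inU k a b x -> 0 < g x) ->
  exists2 c, 0 < c & forall x, inU k a b x -> c <= g x.
Proof.
move=> cg gpos; have [[x0 hx0]|nU] := pselect (exists x, inU k a b x).
  have [c cU hc] := @compact_EVT_min _ _ g [set x | inU k a b x]
    (ex_intro _ x0 hx0) (compact_U k) (continuous_subspaceT cg).
  exists (g c); first by apply: gpos; move: cU; rewrite inE.
  by move=> x hx; apply: hc; rewrite inE.
by exists 1 => // x hx; exfalso; apply: nU; exists x.
Qed.

Lemma lower2 k (G : R * R -> R) (Y : R) : continuous G ->
  (forall x y, inU k a b x -> `|y| <= Y -> 0 < G (x, y)) ->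
  exists2 c, 0 < c & forall x y, inU k a b x -> `|y| <= Y -> c <= G (x, y).
Proof.
move=> cG Gpos.
pose K := [set x | inU k a b x] `*` `[- Y, Y].
have KE z : K z <-> inU k a b z.1 /\ `|z.2| <= Y.
  by rewrite /K /= in_itv /= ler_norml.
have [[z0 hz0]|nK] := pselect (exists z, K z).
  have [c cK hc] := @compact_EVT_min _ _ G K (ex_intro _ z0 hz0)
    (compact_setX (compact_U k) (@segment_compact _ _ _)) (continuous_subspaceT cG).
  move: cK; rewrite inE => /KE [c1 c2].
  exists (G c); first by case: c c1 c2 {hc} => ? ?; apply: Gpos.
  by move=> x y hx hy; apply: hc; rewrite inE; apply/KE.
by exists 1 => // x y hx hy; exfalso; apply: nK; exists (x, y); apply/KE.
Qed.

Lemma poly_min (p : {poly R}) (Y : R) : 0 <= Y ->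
  (forall y, Y <= `|y| -> p.[0] <= p.[y]) ->
  exists c, [/\ `|c| <= Y, (forall y, p.[c] <= p.[y]) & (deriv p).[c] = 0].
Proof.
move=> Y0 tail.
have YY : - Y <= Y by lra.
have [c cI hc] := @EVT_min R (horner p) (- Y) Y YY (continuous_subspaceT (@continuous_horner _ p)).
have cY : `|c| <= Y by rewrite ler_norml; move: cI; rewrite in_itv.
have glob y : p.[c] <= p.[y].
  have [yY|Yy] := leP `|y| Y.
    by apply: hc; rewrite in_itv /= -ler_norml.
  apply: le_trans (tail _ (ltW Yy)).
  by apply: hc; rewrite in_itv /= oppr_le0 Y0.
exists c; split => //.
have cI' : c \in `](- Y - 1), (Y + 1)[%R.
  rewrite in_itv /=; move: cY; rewrite ler_norml => /andP[h1 h2].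
  by apply/andP; split; lra.
have := @derive1_at_min R (horner p) (- Y - 1) (Y + 1) c _ _ cI' (fun t _ => glob t).
have -> : (-Y - 1 <= Y + 1) = true.
  by apply/idP; lra.
move=> /(_ isT (fun t _ => @derivable_horner R p t)) H0.
by rewrite -(@derive_val _ _ _ _ _ _ _ (is_derive_poly p c)) (@derive_val _ _ _ _ _ _ _ H0).
Qed.
End D.
Section E.
Variable R : realType.
Lemma eval2E (f : {poly {poly R}}) x y n : (size f <= n)%N ->
  eval2 f x y = \sum_(i < n) (f`_i).[x] * y ^+ i.
Proof.
move=> sf; rewrite /eval2 (horner_coef_wide _ (leq_trans (size_poly _ _) sf)).
by apply: eq_bigr => i _; rewrite coef_poly; case: ltnP => // h; rewrite (leq_sizeP _ _ (leqnn _) _ h) horner0.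
Qed.

Lemma tail_bound (f : {poly {poly R}}) (d : nat) (x y al B : R) :
  (0 < d)%N -> (size f <= (2 * d).+1)%N -> 0 < al -> al <= (f`_(2 * d)).[x] ->
  \sum_(i < 2 * d) `|(f`_i).[x]| <= B -> 1 + 2 * B / al <= `|y| ->
  al / 2 * `|y| ^+ (2 * d) <= eval2 f x y.
Proof.
move=> d0 sf al0 ha hB hy.
rewrite (eval2E _ _ _ _ sf) big_ord_recr /=.
set S := \sum_(i < 2 * d) _.
pose z := `|y| ^+ (2 * d).-1.
have y1 : 1 <= `|y|.
  apply: le_trans hy; rewrite lerDl divr_ge0 ?(ltW al0) //.
  by rewrite mulr_ge0 // (le_trans _ hB) // sumr_ge0.
have z0 : 0 <= z by rewrite exprn_ge0.
have ey : `|y| ^+ (2 * d) = `|y| * z.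
  by rewrite /z -exprS prednK // muln_gt0.
have yy : y ^+ (2 * d) = `|y| ^+ (2 * d).
  by rewrite -normrX ger0_norm // mulnC exprM sqr_ge0.
have hS : `|S| <= B * z.
  have h1 : \sum_(i < 2 * d) `|(f`_i).[x] * y ^+ i| <= \sum_(i < 2 * d) `|(f`_i).[x]| * z.
    apply: ler_sum => i _; rewrite normrM normrX ler_wpM2l //.
    by apply: ler_weXn2l => //; rewrite -ltnS prednK ?muln_gt0.
  have h2 : \sum_(i < 2 * d) `|(f`_i).[x]| * z <= B * z by rewrite -mulr_suml ler_wpM2r.
  exact: le_trans (ler_norm_sum _ _ _) (le_trans h1 h2).
have hB0 : 0 <= B by rewrite (le_trans _ hB) // sumr_ge0.
have e : al * (2 * B / al) = 2 * B by rewrite mulrC divfK ?gt_eqF.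
have hay : 2 * B <= al * `|y| by nra.
rewrite yy ey.
have : - (B * z) <= S by move: hS; rewrite ler_norml => /andP[].
have : al * (`|y| * z) <= (f`_(2 * d)).[x] * (`|y| * z) by rewrite ler_wpM2r // mulr_ge0.
nra.
Qed.
End E.

Section F.
Variable R : realType.
Variables (a b : nat -> R).

Lemma cont_normp (p : {poly R}) : continuous (fun x : R => `|p.[x]|).
Proof.
move=> x; apply: (continuous_comp (f := horner p) (g := Num.norm)).
  exact: continuous_horner.
exact: norm_continuous.
Qed.

Lemma boundU_sum k (F : nat -> {poly R}) n :
  exists B, forall x, inU k a b x -> \sum_(i < n) `|(F i).[x]| <= B.
Proof.
elim: n => [|n [B hB]]; first by exists 0 => x _; rewrite big_ord0.
have [B' hB'] := @boundU R a b k _ (@cont_normp (F n)).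
exists (B + B') => x hx; rewrite big_ord_recr /=.
by apply: lerD; [apply: hB|apply: hB'].
Qed.

Lemma Pnonneg (s : seq R) x : 0 <= (\prod_(z <- s) ('X - z%:P) ^+ 2).[x].
Proof.
rewrite horner_prod; apply: prodr_ge0 => z _.
by rewrite horner_exp sqr_ge0.
Qed.

Lemma Proot (s : seq R) x : x \in s -> (\prod_(z <- s) ('X - z%:P) ^+ 2).[x] = 0.
Proof.
move=> xs; rewrite horner_prod (big_rem x xs) /= horner_exp hornerXsubC subrr.
by rewrite expr0n mul0r.
Qed.

Lemma Pnroot (s : seq R) x : x \notin s -> (\prod_(z <- s) ('X - z%:P) ^+ 2).[x] != 0.
Proof.
move=> xs; rewrite horner_prod prodf_seq_neq0; apply/allP => z zs /=.
rewrite horner_exp hornerXsubC expf_neq0 // subr_eq0.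
by apply: contraNneq xs => ->.
Qed.

Lemma arith_tail (d : nat) (al c0 Pv BP t q : R) : 0 <= c0 ->
  c0 * (2 ^+ d.+1 * (BP + 1)) <= al -> 0 <= Pv -> Pv <= BP -> 0 <= q ->
  q <= 2 ^+ d * t -> 0 <= t -> c0 * Pv * q <= al / 2 * t.
Proof.
move=> c00 hc Pv0 PvB q0 qt t0.
have B1 : 0 < BP + 1 by rewrite ltr_wpDl // (le_trans Pv0).
have h1 : c0 * Pv * 2 ^+ d.+1 <= al.
  apply: le_trans hc; rewrite -mulrA ler_wpM2l // mulrC ler_wpM2l ?exprn_ge0 //; lra.
have h2 : c0 * Pv * q <= c0 * Pv * (2 ^+ d * t) by rewrite ler_wpM2l // mulr_ge0.
apply: le_trans h2 _.
have e : c0 * Pv * (2 ^+ d * t) = (c0 * Pv * 2 ^+ d.+1) / 2 * t.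
  by rewrite exprS; field.
rewrite e; apply: ler_wpM2r => //; apply: ler_wpM2r => //; by rewrite invr_ge0.
Qed.

Lemma arith_gen (c0 c Pv B q Q0 v : R) : 0 <= c0 -> c0 * ((B + 1) * Q0) <= c ->
  0 <= Pv -> Pv <= B -> 0 <= q -> q <= Q0 -> c <= v -> c0 * Pv * q <= v.
Proof.
move=> c00 hc Pv0 PvB q0 qQ cv.
apply: le_trans cv; apply: le_trans hc.
rewrite mulrA ler_pM // ?mulr_ge0 //.
by rewrite ler_wpM2l // (le_trans PvB) // lerDl.
Qed.

Lemma arith_iv (c0 Pv q Q0 m g C BT Qa Wa K : R) : K = 2 * (C + 1) * (BT + 1) * Q0 ->
  0 <= c0 -> c0 * K <= g -> 0 <= Pv -> Pv <= Qa * BT -> 0 <= q -> q <= Q0 ->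
  0 < g -> g / 2 <= Wa -> Qa * Wa <= m * C -> 0 <= m -> 0 <= Qa -> 0 <= C -> 0 <= BT ->
  c0 * Pv * q <= m.
Proof.
move=> -> c00 hc Pv0 PvQ q0 qQ g0 gW QW m0 Qa0 C0 BT0.
have Q00 : 0 <= Q0 by apply: le_trans qQ.
have h1 : Qa * g <= 2 * (m * C).
  have h : Qa * (g / 2) <= Qa * Wa by rewrite ler_wpM2l.
  have e : Qa * g = 2 * (Qa * (g / 2)) by field.
  by rewrite e ler_wpM2l // (le_trans h QW).
have h2 : c0 * Pv * q <= c0 * (Qa * (BT + 1)) * Q0.
  rewrite ler_pM // ?mulr_ge0 // ler_wpM2l // (le_trans PvQ) // ler_wpM2l //.
  by rewrite lerDl.
apply: le_trans h2 _.
have C1 : 0 < 2 * (C + 1) by rewrite mulr_gt0 // ltr_wpDl.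
rewrite -(@ler_pM2r _ (2 * (C + 1))) //.
have e : c0 * (Qa * (BT + 1)) * Q0 * (2 * (C + 1)) = Qa * (c0 * (2 * (C + 1) * (BT + 1) * Q0)).
  by ring.
rewrite e; apply: le_trans (_ : Qa * g <= _).
  by rewrite ler_wpM2l.
apply: le_trans h1 _.
by rewrite mulrCA ler_wpM2l // ler_wpM2l // lerDl.
Qed.

Lemma powle (x y : R) n : 0 <= x -> x <= y -> x ^+ n <= y ^+ n.
Proof.
move=> x0 xy; apply: lerXn2r; rewrite ?nnegrE //; exact: le_trans xy.
Qed.
End F.

Theorem lemma4 (R : realType) (k : nat) (a b : nat -> R)
  (d : nat) (f : {poly {poly R}}) :
  intervals_ok k a b ->
  (size f <= (2 * d).+1)%N ->
  (forall x y : R, inU k a b x -> 0 <= eval2 f x y) ->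
  finite_set [set p : R * R | inU k a b p.1 /\ eval2 f p.1 p.2 = 0] ->
  (forall x : R, inU k a b x -> 0 < (f`_(2 * d)).[x]) ->
  exists eps : {poly R},
    (forall x : R, inU k a b x -> 0 <= eps.[x]) /\
    (forall x y : R, inU k a b x ->
        eps.[x] * (1 + y ^+ 2) ^+ d <= eval2 f x y) /\
    (forall x : R, inU k a b x ->
        (eps.[x] = 0 <-> exists y : R, eval2 f x y = 0)).
Proof.
move=> _ sf fpos fin lpos.
have [[x1 hx1]|nU] := pselect (exists x, inU k a b x); last first.
  exists 0; split; first by move=> x hx; exfalso; apply: nU; exists x.
  split; first by move=> x y hx; exfalso; apply: nU; exists x.
  by move=> x hx; exfalso; apply: nU; exists x.
have [d0|dpos] := posnP d.
  subst d.
  have ev x y : eval2 f x y = (f`_0).[x].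
    by rewrite (@eval2E _ _ _ _ _ sf) big_ord1 expr0 mulr1.
  exists (f`_0); split; [|split].
  - by move=> x hx; rewrite -(ev x 0); apply: fpos.
  - by move=> x y hx; rewrite expr0 mulr1 ev.
  - move=> x hx; split => [h|[y]]; first by exists 0; rewrite ev.
    by rewrite ev.
set N := (2 * d)%N in sf lpos *.
have N0 : (0 < N)%N by rewrite /N muln_gt0.
have lc0 : f`_N != 0.
  by apply/eqP => h; have := lpos x1 hx1; rewrite h horner0 ltxx.
have sfN : size f = N.+1.
  apply/eqP; rewrite eqn_leq sf /= ltnNge; apply/negP => /leq_sizeP h.
  by move: lc0; rewrite h ?eqxx.
have lead : lead_coef f = f`_N by rewrite lead_coefE sfN.
have [al al0 hal] := @lowerU R a b k (horner (f`_N)) (@continuous_horner _ _) lpos.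
have [B hB] := @boundU_sum R a b k (fun i => f`_i) N.
have B0 : 0 <= B by apply: le_trans (hB x1 hx1); rewrite sumr_ge0.
pose Y := 1 + 2 * B / al.
have Y1 : 1 <= Y by rewrite /Y lerDl divr_ge0 ?mulr_ge0 // ltW.
have tail x y : inU k a b x -> Y <= `|y| -> al / 2 * `|y| ^+ N <= eval2 f x y.
  move=> hx hy; exact: (@tail_bound R f d x y al B dpos sf al0 (hal x hx) (hB x hx) hy).
have minz x : inU k a b x -> exists c, [/\ `|c| <= Y,
    (forall y, eval2 f x c <= eval2 f x y) &
    (deriv (map_poly (horner_eval x) f)).[c] = 0].
  move=> hx.
  have Y0 : 0 <= Y by apply: le_trans Y1.
  have := @poly_min R (map_poly (horner_eval x) f) Y Y0.
  case.
    move=> y hy.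
    have -> : (map_poly (horner_eval x) f).[0] = (f`_0).[x].
      by rewrite horner_coef0 coef_map.
    apply: le_trans (tail x y hx hy).
    apply: le_trans (ler_norm _) _.
    have h0 : `|(f`_0).[x]| <= B.
      apply: le_trans (hB x hx); rewrite -(prednK N0) big_ord_recl /= lerDl.
      by rewrite sumr_ge0.
    apply: le_trans h0 _.
    have y1 : 1 <= `|y| by apply: le_trans hy.
    have : Y <= `|y| ^+ N by apply: le_trans hy (ler_eXnr N0 y1).
    move=> hyN.
    have e : al / 2 * Y = al / 2 + B by rewrite /Y; field; rewrite gt_eqF.
    apply: le_trans (_ : al / 2 * Y <= _).
      by rewrite e lerDr divr_ge0 // ltW.
    by rewrite ler_wpM2l // divr_ge0 // ltW.
  move=> c [cY cmin cd]; exists c; split => //.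
have [s hs] := (finite_seqP _).1 fin.
pose X0 := map fst s.
have Z1 x y : inU k a b x -> eval2 f x y = 0 -> x \in X0.
  move=> hx h0.
  have : [set` s] (x, y) by rewrite -hs.
  by move=> /= xys; apply/mapP; exists (x, y).
have Z2 x : x \in X0 -> exists y, eval2 f x y = 0.
  case/mapP => [[x' y] ps ->] /=.
  have : [set p : R * R | inU k a b p.1 /\ eval2 f p.1 p.2 = 0] (x', y) by rewrite hs.
  by case=> _ h; exists y.
have s2 : (2 < size f)%N by rewrite sfN ltnS /N; move: dpos; clear; lia.
have lf1 : (lead_coef f).[x1] != 0 by rewrite lead gt_eqF // lpos.
have [Rp [R0 HR]] := @resultant_exists R f x1 s2 lf1.
have [R1 [s0 [ER cR0]]] := @decomp_t R Rp R0.
have [C hC] := @boundU_sum R a b k (fun i => R1`_i) (size R1).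
have [Q [W [T [E [cQW Wz PE]]]]] := @factor_list R (R1`_0) X0 cR0.
pose P := \prod_(z <- X0) ('X - z%:P) ^+ 2.
pose T' := T * P.
pose E' := E.+1.
have PE' : P ^+ E' = Q * T' by rewrite /E' exprS PE /T' /P; ring.
have [BT hBT] := @boundU R a b k _ (@cont_normp R T').
have [BP hBP] := @boundU R a b k _ (@cont_normp R (P ^+ E')).
have C0 : 0 <= C by apply: le_trans (hC x1 hx1); rewrite sumr_ge0.
have BT0 : 0 <= BT by apply: le_trans (hBT x1 hx1).
have BP0 : 0 <= BP by apply: le_trans (hBP x1 hx1).
have contG : continuous (fun z : R * R => eval2 f z.1 z.2 + `|W.[z.1]|).
  move=> z; apply: cvgD; first exact: (@cont_ev2 R f z).
  apply: (continuous_comp (f := fst) (g := fun x => `|W.[x]|)); first exact: cvg_fst.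
  exact: cont_normp.
have Gpos : forall x y, inU k a b x -> `|y| <= Y -> 0 < eval2 f (x, y).1 (x, y).2 + `|W.[(x, y).1]|.
  move=> x y hx hy /=.
  have := fpos x y hx; rewrite le_eqVlt => /orP[/eqP h|h].
    by rewrite -h add0r normr_gt0; apply: Wz; apply: (Z1 x y hx); rewrite -h.
  by apply: lt_le_trans h _; rewrite lerDl.
have [g g0 hg] := @lower2 R a b k (fun z => eval2 f z.1 z.2 + `|W.[z.1]|) Y contG Gpos.
pose Q0 := (1 + Y ^+ 2) ^+ d.
have Q00 : 0 < Q0 by rewrite exprn_gt0 // ltr_wpDr // sqr_ge0.
pose K1 := 2 ^+ d.+1 * (BP + 1).
pose K2 := (BP + 1) * Q0.
pose K3 := 2 * (C + 1) * (BT + 1) * Q0.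
have K10 : 0 < K1 by rewrite /K1 mulr_gt0 ?exprn_gt0 // ltr_wpDl.
have K20 : 0 < K2 by rewrite /K2 mulr_gt0 // ltr_wpDl.
have K30 : 0 < K3 by rewrite /K3 !mulr_gt0 // ltr_wpDl.
have mg0 : 0 < Num.min g 1 by rewrite lt_min g0 ltr01.
pose c0 := Num.min (al / K1) (Num.min (Num.min g 1 / 2 / K2) (g / K3)).
have c00 : 0 < c0.
  by rewrite /c0 !lt_min !divr_gt0.
have hc1 : c0 * K1 <= al.
  by rewrite -ler_pdivlMr // /c0 ge_min lexx.
have hc2 : c0 * ((BP + 1) * Q0) <= Num.min g 1 / 2.
  by rewrite -ler_pdivlMr // /c0 ge_min ge_min lexx orbT.
have hc3 : c0 * K3 <= g.
  by rewrite -ler_pdivlMr // /c0 ge_min ge_min lexx !orbT.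
have Pv0 x : 0 <= (P ^+ E').[x] by rewrite horner_exp exprn_ge0 // Pnonneg.
have PvB x : inU k a b x -> (P ^+ E').[x] <= BP.
  by move=> hx; apply: le_trans (ler_norm _) (hBP x hx).
have PvX0 x : x \in X0 -> (P ^+ E').[x] = 0.
  by move=> hx; rewrite horner_exp Proot // expr0n.
have PvnX0 x : x \notin X0 -> (P ^+ E').[x] != 0.
  by move=> hx; rewrite horner_exp expf_neq0 // Pnroot.
exists (c0 *: P ^+ E'); split; [|split].
- by move=> x hx; rewrite hornerZ mulr_ge0 // ltW.
- move=> x y hx; rewrite hornerZ.
  have q0 : 0 <= (1 + y ^+ 2) ^+ d by rewrite exprn_ge0 // addr_ge0 // sqr_ge0.
  have [Yy|yY] := leP Y `|y|.
    apply: le_trans (tail x y hx Yy).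
    apply: (@arith_tail R d al c0 _ BP) => //; first exact: ltW.
    + exact: PvB.
    + have y1 : 1 <= `|y| by apply: le_trans Yy.
      have ny : `|y| ^+ 2 = y ^+ 2 by rewrite real_normK // num_real.
      have e : 2 ^+ d * `|y| ^+ N = (2 * y ^+ 2) ^+ d.
        by rewrite exprMn /N exprM ny.
      rewrite e; apply: powle; first by rewrite addr_ge0 // sqr_ge0.
      rewrite -ny; nra.
    + by rewrite exprn_ge0.
  have [c [cY cmin cd]] := minz x hx.
  have m0 : 0 <= eval2 f x c := fpos x c hx.
  have qQ : (1 + y ^+ 2) ^+ d <= Q0.
    apply: powle; first by rewrite addr_ge0 // sqr_ge0.
    rewrite lerD2l -real_normK ?num_real //; apply: powle => //; exact: ltW.
  have [xX|xX] := boolP (x \in X0).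
    by rewrite PvX0 // mulr0 mul0r fpos.
  have mn1 : Num.min g 1 <= 1 by rewrite ge_min lexx orbT.
  have mng : Num.min g 1 <= g by rewrite ge_min lexx.
  have [Ws|Wb] := leP `|W.[x]| (g / 2).
    apply: (@arith_gen R c0 (Num.min g 1 / 2) _ BP _ Q0) => //.
    + exact: ltW.
    + exact: PvB.
    + have := hg x y hx (ltW yY); rewrite /=; lra.
  apply: le_trans (cmin y).
  have [m1|m1] := leP 1 (eval2 f x c).
    apply: (@arith_gen R c0 (Num.min g 1 / 2) _ BP _ Q0) => //.
    + exact: ltW.
    + exact: PvB.
    + lra.
  have mpos : 0 < eval2 f x c.
    rewrite lt_def m0 andbT; apply/eqP => h.
    by move: xX; rewrite (Z1 x c hx h).
  have hr' : (map_poly (horner_eval x) (R1 * 'X ^+ s0)).[eval2 f x c] = 0.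
    by rewrite -ER; exact: (HR x c cd).
  have m01 : 0 < eval2 f x c <= 1 by rewrite mpos ltW.
  have hb := @root_bound R R1 s0 x (eval2 f x c) m01 hr'.
  have hcb : `|(R1`_0).[x]| <= eval2 f x c * C.
    apply: le_trans hb _; apply: ler_wpM2l => //; exact: hC.
  rewrite cQW hornerM normrM in hcb.
  have PvQ : (P ^+ E').[x] <= `|Q.[x]| * BT.
    rewrite PE' hornerM; apply: le_trans (ler_norm _) _.
    by rewrite normrM ler_wpM2l // hBT.
  apply: (@arith_iv R c0 _ _ Q0 (eval2 f x c) g C BT `|Q.[x]| `|W.[x]| K3) => //.
  + exact: ltW.
  + exact: ltW.
- move=> x hx; rewrite hornerZ; split.
    move/eqP; rewrite mulf_eq0 (gt_eqF c00) /= => /eqP hP.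
    have [xX|xX] := boolP (x \in X0); first exact: Z2.
    by move: (PvnX0 x xX); rewrite hP eqxx.
  by case=> y hy; rewrite PvX0 ?mulr0 //; exact: (Z1 x y hx hy).
Qed.
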